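(* Let $\mathfrak g$ be a pre-Lie algebra, $r\in\mathrm{Sym}^2(\mathfrak g)$ an $\mathfrak s$-matrix, and $r^1_t=r+t\kappa_1$, $r^2_t=r+t\kappa_2$ one-parameter infinitesimal deformations of $r$. For $i=1,2$ let $\pi_i(\alpha,\beta)=\mathrm{ad}^*_{\kappa_i^\sharp(\alpha)}\beta-R^*_{\kappa_i^\sharp(\beta)}\alpha$ be the corresponding one-parameter infinitesimal deformations of the phase space $(\mathfrak g^c,\mathfrak g^{*c},\omega_p)$ associated to $r$. If $r^1_t$ and $r^2_t$ are equivalent, then the phase-space deformations generated by $\pi_1$ and $\pi_2$ are equivalent.
   Context: A pre-Lie algebra is a finite-dimensional vector space over a field $\mathbb K$ of characteristic $0$ with product $\cdot$ satisfying $(x\cdot y)\cdot z-x\cdot(y\cdot z)=(y\cdot x)\cdot z-y\cdot(x\cdot z)$; $\mathfrak g^c$ is $\mathfrak g$ with the commutator bracket $[x,y]_{\mathfrak g}$. $L_xy=x\cdot y$, $R_xy=y\cdot x$, $\mathrm{ad}_xy=[x,y]_{\mathfrak g}$, $\langle L^*_x\alpha,y\rangle=-\langle\alpha,x\cdot y\rangle$, $\langle R^*_x\alpha,y\rangle=-\langle\alpha,y\cdot x\rangle$, $\mathrm{ad}^*_x=L^*_x-R^*_x$. For $r\in\mathrm{Sym}^2(\mathfrak g)$, $\langle r^\sharp(\alpha),\beta\rangle=r(\alpha,\beta)$; for $r=\sum_ia_i\otimes b_i$, $[r,r]=-\sum a_i\cdot a_j\otimes b_i\otimes b_j+\sum a_i\otimes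 b_i\cdot a_j\otimes b_j+\sum a_i\otimes a_j\otimes[b_i,b_j]_{\mathfrak g}$; $r$ is an $\mathfrak s$-matrix if $[r,r]=0$; $\alpha\cdot_r\beta=\mathrm{ad}^*_{r^\sharp(\alpha)}\beta-R^*_{r^\sharp(\beta)}\alpha$. A one-parameter infinitesimal deformation of $r$ is $r+t\kappa$, $\kappa\in\mathrm{Sym}^2(\mathfrak g)$, an $\mathfrak s$-matrix for all $t\in\mathbb K$. $\tilde{\mathcal C}^1_{\mathfrak s}(\mathfrak g)=\{x\in\mathfrak g:(R_x\otimes\mathrm{Id}+\mathrm{Id}\otimes R_x)r=0\}$. A weak homomorphism from $\mathfrak s$-matrix $r_2$ to $r_1$ is a pair $(\phi,\varphi)$, $\phi:\mathfrak g^c\to\mathfrak g^c$ a Lie algebra homomorphism, $\varphi$ linear, with $(\varphi\otimes\mathrm{Id})r_1=(\mathrm{Id}\otimes\phi)r_2$ and $\varphi(\phi(x)\cdot y)=x\cdot\varphi(y)$. Deformations $r^1_t,r^2_t$ are equivalent if there is $x\in\tilde{\mathcal C}^1_{\mathfrak s}(\mathfrak g)$ with $(\mathrm{Id}+t\,\mathrm{ad}_x,\mathrm{Id}-tL_x)$ a weak homomorphism from $r^2_t$ to $r^1_t$ for every $t$. For a pre-Lie product $\ast$ on $\mathfrak g^*$ let $[x+\alpha,y+\beta]_{p,\ast}=(\alpha\ast\beta-\beta\ast\alpha)+L^*_x\beta-L^*_y\alpha+L^*_\alpha y-L^*_\beta x+[x,y]_{\mathfrak g}$ on $\mathfrak g\oplus\mathfrak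 g^*$, where $\langle L^*_\alpha x,\beta\rangle=-\langle x,\alpha\ast\beta\rangle$; this is a phase space of $\mathfrak g^c$ if it is a Lie bracket and $\omega_p(x+\alpha,y+\beta)=\langle\alpha,y\rangle-\langle x,\beta\rangle$ is a $2$-cocycle. $\pi$ generates a one-parameter infinitesimal deformation of the phase space associated to $r$ if for all $t$, $\ast_t=\cdot_r+t\pi$ is a pre-Lie product giving a phase space. A weak homomorphism from the phase space defined by $\ast$ to the one defined by $\ast'$ is a pair $(\phi,\varphi)$ with $\phi:\mathfrak g^c\to\mathfrak g^c$ a Lie algebra homomorphism and $\varphi:\mathfrak g\to\mathfrak g$ linear such that $\varphi^*$ is a Lie algebra homomorphism from $(\mathfrak g^*,[\cdot,\cdot]_\ast)$ to $(\mathfrak g^*,[\cdot,\cdot]_{\ast'})$ and $\phi+\varphi^*$ is a Lie algebra homomorphism from $(\mathfrak g\oplus\mathfrak g^*,[\cdot,\cdot]_{p,\ast})$ to $(\mathfrak g\oplus\mathfrak g^*,[\cdot,\cdot]_{p,\ast'})$. Two phase-space deformations generated by $\pi_1,\pi_2$ are equivalent if there is $x\in\mathfrak g$ such that for all $t$, $(\mathrm{Id}+t\,\mathrm{ad}_x,\mathrm{Id}-tL_x)$ is a weak homomorphism from the phase space defined by $\cdot_r+t\pi_2$ to that defined by $\cdot_r+t\pi_1$. *)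

(* Defs.v *)
(* Coordinate model of a finite-dimensional pre-Lie algebra
   g = F^n (row vectors 'rV[F]_n), its dual g^* = F^n with the standard pairing,
   Sym^2(g) = sym_tensor n x n matrices, and 2-/3-tensors as coefficient arrays. *)
From HB Require Import structures.
From mathcomp Require Import all_boot all_order all_algebra.
Set Implicit Arguments. Unset Strict Implicit. Unset Printing Implicit Defensive.
Import Order.TTheory GRing.Theory Num.Theory.
Local Open Scope ring_scope.

Section Defs.
Variables (F : fieldType) (n : nat).

Definition vec := 'rV[F]_n.

(* structure constants: e_i . e_j = \sum_k c i j k e_k *)
Definition sconst := 'I_n -> 'I_n -> 'I_n -> F.

Definition prod (c : sconst) (x y : vec) : vec :=
  \row_k \sum_i \sum_j x 0 i * y 0 j * c i j k.

Definition preLie (c : sconst) : Prop :=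
  forall x y z : vec,
    prod c (prod c x y) z - prod c x (prod c y z)
    = prod c (prod c y x) z - prod c y (prod c x z).

Definition brg (c : sconst) (x y : vec) : vec := prod c x y - prod c y x.

Definition evec (j : 'I_n) : vec := \row_k (k == j)%:R.

Definition pairing (alpha x : vec) : F := \sum_i alpha 0 i * x 0 i.

(* <L^*_x alpha, y> = - <alpha, x . y> *)
Definition Lstar (c : sconst) (x alpha : vec) : vec :=
  \row_j - pairing alpha (prod c x (evec j)).
(* <R^*_x alpha, y> = - <alpha, y . x> *)
Definition Rstar (c : sconst) (x alpha : vec) : vec :=
  \row_j - pairing alpha (prod c (evec j) x).
Definition adstar (c : sconst) (x alpha : vec) : vec :=
  Lstar c x alpha - Rstar c x alpha.

(* r = \sum_{k,l} r k l e_k (x) e_l ;  <r^#(alpha), beta> = r(alpha, beta) *)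
Definition sharp (r : 'M[F]_n) (alpha : vec) : vec := alpha *m r.

Definition sym_tensor (r : 'M[F]_n) : Prop := r^T = r.

Definition tensor2 (a b : vec) : 'M[F]_n := a^T *m b.
Definition tensor3 (a b d : vec) : {ffun 'I_n * 'I_n * 'I_n -> F} :=
  [ffun pqs => a 0 pqs.1.1 * b 0 pqs.1.2 * d 0 pqs.2].

Definition rr (c : sconst) (r : 'M[F]_n) : {ffun 'I_n * 'I_n * 'I_n -> F} :=
  [ffun pqs => \sum_k \sum_l \sum_k' \sum_l' r k l * r k' l' *
    (- tensor3 (prod c (evec k) (evec k')) (evec l) (evec l') pqs
     + tensor3 (evec k) (prod c (evec l) (evec k')) (evec l') pqs
     + tensor3 (evec k) (evec k') (brg c (evec l) (evec l')) pqs)].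

Definition smatrix (c : sconst) (r : 'M[F]_n) : Prop := rr c r = 0.

Definition inf_deformation (c : sconst) (r kappa : 'M[F]_n) : Prop :=
  sym_tensor kappa /\ forall t : F, smatrix c (r + t *: kappa).

Definition C1 (c : sconst) (r : 'M[F]_n) (x : vec) : Prop :=
  \sum_k \sum_l r k l *: (tensor2 (prod c (evec k) x) (evec l)
                          + tensor2 (evec k) (prod c (evec l) x)) = 0.

Definition linearP (f : vec -> vec) : Prop :=
  forall (a : F) (u v : vec), f (a *: u + v) = a *: f u + f v.

Definition lie_hom_g (c : sconst) (f : vec -> vec) : Prop :=
  linearP f /\ forall x y, f (brg c x y) = brg c (f x) (f y).

Definition weak_hom_s (c : sconst) (r2 r1 : 'M[F]_n)
    (phi varphi : vec -> vec) : Prop :=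
  [/\ lie_hom_g c phi, linearP varphi,
      \sum_k \sum_l r1 k l *: tensor2 (varphi (evec k)) (evec l)
      = \sum_k \sum_l r2 k l *: tensor2 (evec k) (phi (evec l))
    & forall x y, varphi (prod c (phi x) y) = prod c x (varphi y)].

Definition Lop (c : sconst) (x : vec) : vec -> vec := fun y => prod c x y.
Definition adop (c : sconst) (x : vec) : vec -> vec := fun y => brg c x y.

Definition deform_equiv (c : sconst) (r kappa1 kappa2 : 'M[F]_n) : Prop :=
  exists x : vec, C1 c r x /\
    forall t : F,
      weak_hom_s c (r + t *: kappa2) (r + t *: kappa1)
        (fun y => y + t *: adop c x y) (fun y => y - t *: Lop c x y).

Definition dprod := vec -> vec -> vec.  (* a product on g^* *)

Definition dot_r (c : sconst) (r : 'M[F]_n) : dprod :=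
  fun alpha beta => adstar c (sharp r alpha) beta - Rstar c (sharp r beta) alpha.

Definition pi_kappa (c : sconst) (kappa : 'M[F]_n) : dprod := dot_r c kappa.

(* <L^*_alpha x, beta> = - <x, alpha * beta>  (L^*_alpha x in g) *)
Definition LstarD (P : dprod) (alpha x : vec) : vec :=
  \row_j - pairing (P alpha (evec j)) x.

Definition brD (P : dprod) (alpha beta : vec) : vec := P alpha beta - P beta alpha.

(* elements of g (+) g^* as pairs (x, alpha) *)
Definition brp (c : sconst) (P : dprod) (u v : vec * vec) : vec * vec :=
  let: (x, alpha) := u in let: (y, beta) := v in
  (LstarD P alpha y - LstarD P beta x + brg c x y,
   brD P alpha beta + Lstar c x beta - Lstar c y alpha).

Definition omega_p (u v : vec * vec) : F :=
  pairing u.2 v.1 - pairing v.2 u.1.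

Definition addp (u v : vec * vec) : vec * vec := (u.1 + v.1, u.2 + v.2).
Definition scalep (a : F) (u : vec * vec) : vec * vec := (a *: u.1, a *: u.2).

Definition bilinear_dprod (P : dprod) : Prop :=
  (forall a b1 b2 beta, P (a *: b1 + b2) beta = a *: P b1 beta + P b2 beta) /\
  (forall a alpha b1 b2, P alpha (a *: b1 + b2) = a *: P alpha b1 + P alpha b2).

Definition preLieD (P : dprod) : Prop :=
  bilinear_dprod P /\
  forall x y z, P (P x y) z - P x (P y z) = P (P y x) z - P y (P x z).

Definition lie_bracket_p (B : vec * vec -> vec * vec -> vec * vec) : Prop :=
  [/\ (forall a u1 u2 v, B (addp (scalep a u1) u2) v = addp (scalep a (B u1 v)) (B u2 v)),
      (forall a u v1 v2, B u (addp (scalep a v1) v2) = addp (scalep a (B u v1)) (B u v2)),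
      (forall u, B u u = (0, 0))
    & (forall u v w, addp (B u (B v w)) (addp (B v (B w u)) (B w (B u v))) = (0, 0))].

Definition phase_space (c : sconst) (P : dprod) : Prop :=
  lie_bracket_p (brp c P) /\
  forall u v w, omega_p (brp c P u v) w + omega_p (brp c P v w) u
                + omega_p (brp c P w u) v = 0.

Definition phase_deformation (c : sconst) (r : 'M[F]_n) (pi : dprod) : Prop :=
  forall t : F, preLieD (fun a b => dot_r c r a b + t *: pi a b)
             /\ phase_space c (fun a b => dot_r c r a b + t *: pi a b).

(* varphi^* : <varphi^* alpha, x> = <alpha, varphi x> *)
Definition dualmap (varphi : vec -> vec) (alpha : vec) : vec :=
  \row_j pairing alpha (varphi (evec j)).

Definition lie_hom_D (P P' : dprod) (f : vec -> vec) : Prop :=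
  linearP f /\ forall a b, f (brD P a b) = brD P' (f a) (f b).

Definition lie_hom_p (c : sconst) (P P' : dprod) (f : vec * vec -> vec * vec) : Prop :=
  (forall a u v, f (addp (scalep a u) v) = addp (scalep a (f u)) (f v)) /\
  forall u v, f (brp c P u v) = brp c P' (f u) (f v).

Definition weak_hom_p (c : sconst) (P P' : dprod) (phi varphi : vec -> vec) : Prop :=
  [/\ lie_hom_g c phi, linearP varphi,
      lie_hom_D P P' (dualmap varphi)
    & lie_hom_p c P P' (fun u => (phi u.1, dualmap varphi u.2))].

Definition phase_equiv (c : sconst) (r : 'M[F]_n) (pi1 pi2 : dprod) : Prop :=
  exists x : vec, forall t : F,
    weak_hom_p c (fun a b => dot_r c r a b + t *: pi2 a b)
                 (fun a b => dot_r c r a b + t *: pi1 a b)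
                 (fun y => y + t *: adop c x y) (fun y => y - t *: Lop c x y).

End Defs.

(* Main.v *)
Require Import Defs.
From HB Require Import structures.
From mathcomp Require Import all_boot all_order all_algebra.
From mathcomp Require Import ring.
Import Order.TTheory GRing.Theory Num.Theory.
Local Open Scope ring_scope.
Set Implicit Arguments. Unset Strict Implicit.

Lemma pairingDl {F : fieldType} {n : nat} (a : F) (u v w : vec F n) :
  pairing (a *: u + v) w = a * pairing u w + pairing v w.
Proof. rewrite /pairing mulr_sumr -big_split; apply eq_bigr => i _; by rewrite !mxE mulrDl mulrA. Qed.

Lemma pairingDr {F : fieldType} {n : nat} (a : F) (u v w : vec F n) :
  pairing w (a *: u + v) = a * pairing w u + pairing w v.
Proof. rewrite /pairing mulr_sumr -big_split; apply eq_bigr => i _; rewrite !mxE mulrDr !mulrA [w 0 i * a]mulrC. reflexivity. Qed.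

Lemma pairingC {F : fieldType} {n : nat} (u v : vec F n) : pairing u v = pairing v u.
Proof. by rewrite /pairing; apply eq_bigr => i _; rewrite mulrC. Qed.

Lemma pairing_addl {F : fieldType} {n : nat} (u v w : vec F n) :
  pairing (u + v) w = pairing u w + pairing v w.
Proof. by have := pairingDl 1 u v w; rewrite scale1r mul1r. Qed.
Lemma pairing_addr {F : fieldType} {n : nat} (u v w : vec F n) :
  pairing w (u + v) = pairing w u + pairing w v.
Proof. by have := pairingDr 1 u v w; rewrite scale1r mul1r. Qed.
Lemma pairing_scalel {F : fieldType} {n : nat} (a : F) (u w : vec F n) :
  pairing (a *: u) w = a * pairing u w.
Proof. rewrite /pairing mulr_sumr; apply: eq_bigr => i _; by rewrite !mxE mulrA. Qed.
Lemma pairing_scaler {F : fieldType} {n : nat} (a : F) (u w : vec F n) :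
  pairing w (a *: u) = a * pairing w u.
Proof. by rewrite pairingC pairing_scalel pairingC. Qed.
Lemma pairing_oppl {F : fieldType} {n : nat} (u w : vec F n) :
  pairing (- u) w = - pairing u w.
Proof. by rewrite -scaleN1r pairing_scalel mulN1r. Qed.
Lemma pairing_oppr {F : fieldType} {n : nat} (u w : vec F n) :
  pairing w (- u) = - pairing w u.
Proof. by rewrite pairingC pairing_oppl pairingC. Qed.
Lemma pairing_subl {F : fieldType} {n : nat} (u v w : vec F n) :
  pairing (u - v) w = pairing u w - pairing v w.
Proof. by rewrite pairing_addl pairing_oppl. Qed.
Lemma pairing_subr {F : fieldType} {n : nat} (u v w : vec F n) :
  pairing w (u - v) = pairing w u - pairing w v.
Proof. by rewrite pairing_addr pairing_oppr. Qed.

Lemma pairing_evec {F : fieldType} {n : nat} (u : vec F n) j :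
  pairing u (evec F j) = u 0 j.
Proof.
rewrite /pairing (bigD1 j) //= big1 ?addr0; first by rewrite mxE eqxx mulr1.
by move=> i /negbTE H; rewrite mxE H mulr0.
Qed.

Lemma vec_ext {F : fieldType} {n : nat} (u v : vec F n) :
  (forall y, pairing u y = pairing v y) -> u = v.
Proof. move=> H; apply/rowP => j; rewrite -!pairing_evec; exact: H. Qed.

Lemma row_expand {F : fieldType} {n : nat} (y : vec F n) :
  y = \sum_j y 0 j *: evec F j.
Proof.
apply/rowP => k; rewrite summxE (bigD1 k) //= big1 ?addr0.
  by rewrite !mxE eqxx mulr1.
by move=> j /negbTE H; rewrite !mxE eq_sym H mulr0.
Qed.

Lemma lin_expand {F : fieldType} {n : nat} (l : vec F n -> F) :
  (forall a u v, l (a *: u + v) = a * l u + l v) ->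
  forall y, l y = \sum_j y 0 j * l (evec F j).
Proof.
move=> H.
have l0 : l 0 = 0.
  have := H 1 0 0; rewrite scaler0 addr0 mul1r => E.
  by apply: (@addrI _ (l 0)); rewrite addr0 -E.
have lD : {morph l : u v / u + v >-> u + v}.
  by move=> u v; have := H 1 u v; rewrite scale1r mul1r.
move=> y; rewrite {1}(row_expand y) (big_morph l lD l0).
by apply eq_bigr => j _; rewrite -(addr0 (_ *: _)) H l0 addr0.
Qed.

Lemma linv_expand {F : fieldType} {n : nat} (f : vec F n -> vec F n) :
  Defs.linearP f -> forall y, f y = \sum_j y 0 j *: f (evec F j).
Proof.
move=> H y; apply/rowP => k; rewrite summxE.
rewrite (@lin_expand _ _ (fun v => f v 0 k)); last first.
  by move=> a u v; rewrite H !mxE.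
by apply eq_bigr => j _; rewrite mxE.
Qed.

Lemma prodDl {F : fieldType} {n : nat} (c : sconst F n) (a : F) (x y z : vec F n) :
  prod c (a *: x + y) z = a *: prod c x z + prod c y z.
Proof.
apply/rowP => k; rewrite !mxE mulr_sumr -big_split; apply: eq_bigr => i _.
rewrite mulr_sumr -big_split; apply: eq_bigr => j _; rewrite !mxE /=; ring.
Qed.

Lemma prodDr {F : fieldType} {n : nat} (c : sconst F n) (a : F) (x y z : vec F n) :
  prod c z (a *: x + y) = a *: prod c z x + prod c z y.
Proof.
apply/rowP => k; rewrite !mxE mulr_sumr -big_split; apply: eq_bigr => i _.
rewrite mulr_sumr -big_split; apply: eq_bigr => j _; rewrite !mxE /=; ring.
Qed.

Lemma lin0 {F : fieldType} {n : nat} (f : vec F n -> vec F n) :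
  Defs.linearP f -> f 0 = 0.
Proof.
move=> H; have := H 1 0 0; rewrite scaler0 addr0 scale1r => E.
by apply: (@addrI _ (f 0)); rewrite addr0 -E.
Qed.
Lemma linD {F : fieldType} {n : nat} (f : vec F n -> vec F n) :
  Defs.linearP f -> forall u v, f (u + v) = f u + f v.
Proof. by move=> H u v; have := H 1 u v; rewrite !scale1r. Qed.
Lemma linZ {F : fieldType} {n : nat} (f : vec F n -> vec F n) :
  Defs.linearP f -> forall a u, f (a *: u) = a *: f u.
Proof. by move=> H a u; have := H a u 0; rewrite !addr0 lin0 // addr0. Qed.
Lemma linN {F : fieldType} {n : nat} (f : vec F n -> vec F n) :
  Defs.linearP f -> forall u, f (- u) = - f u.
Proof. by move=> H u; rewrite -scaleN1r linZ // scaleN1r. Qed.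
Lemma linB {F : fieldType} {n : nat} (f : vec F n -> vec F n) :
  Defs.linearP f -> forall u v, f (u - v) = f u - f v.
Proof. by move=> H u v; rewrite linD // linN. Qed.

Lemma tensor2E {F : fieldType} {n : nat} (a b : vec F n) p q :
  tensor2 a b p q = a 0 p * b 0 q.
Proof. by rewrite /tensor2 !mxE big_ord1 !mxE. Qed.

Lemma evecE {F : fieldType} {n : nat} (j q : 'I_n) : evec F j 0 q = (q == j)%:R.
Proof. by rewrite mxE. Qed.

Lemma sum_ev {F : fieldType} {n : nat} (f : 'I_n -> F) (q : 'I_n) :
  \sum_l f l * evec F l 0 q = f q.
Proof.
rewrite (bigD1 q) //= big1 ?addr0; first by rewrite evecE eqxx mulr1.
by move=> l /negbTE H; rewrite evecE eq_sym H mulr0.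
Qed.

Lemma pairing_def {F : fieldType} {n : nat} (u v : vec F n) :
  pairing u v = \sum_i u 0 i * v 0 i.
Proof. by []. Qed.

Lemma Lstar_pair {F : fieldType} {n : nat} (c : sconst F n) (x al y : vec F n) :
  pairing (Lstar c x al) y = - pairing al (prod c x y).
Proof.
have Hl : forall a u v, (fun y => - pairing al (prod c x y)) (a *: u + v)
   = a * (fun y => - pairing al (prod c x y)) u + (fun y => - pairing al (prod c x y)) v.
  by move=> a u v /=; rewrite prodDr pairingDr; ring.
have := lin_expand Hl y => /= ->.
rewrite pairing_def; apply: eq_bigr => j _; by rewrite mxE mulrC.
Qed.

Lemma Rstar_pair {F : fieldType} {n : nat} (c : sconst F n) (x al y : vec F n) :
  pairing (Rstar c x al) y = - pairing al (prod c y x).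
Proof.
have Hl : forall a u v, (fun y => - pairing al (prod c y x)) (a *: u + v)
   = a * (fun y => - pairing al (prod c y x)) u + (fun y => - pairing al (prod c y x)) v.
  by move=> a u v /=; rewrite prodDl pairingDr; ring.
have := lin_expand Hl y => /= ->.
rewrite pairing_def; apply: eq_bigr => j _; by rewrite mxE mulrC.
Qed.

Lemma dualmap_pair {F : fieldType} {n : nat} (f : vec F n -> vec F n) (al y : vec F n) :
  Defs.linearP f -> pairing (dualmap f al) y = pairing al (f y).
Proof.
move=> Hf.
have Hl : forall a u v, (fun y => pairing al (f y)) (a *: u + v)
   = a * (fun y => pairing al (f y)) u + (fun y => pairing al (f y)) v.
  by move=> a u v /=; rewrite Hf pairingDr.
have := lin_expand Hl y => /= ->.
rewrite pairing_def; apply: eq_bigr => j _; by rewrite mxE mulrC.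
Qed.

Lemma LstarD_pair {F : fieldType} {n : nat} (P : dprod F n) (al x be : vec F n) :
  (forall a b1 b2, P al (a *: b1 + b2) = a *: P al b1 + P al b2) ->
  pairing (LstarD P al x) be = - pairing (P al be) x.
Proof.
move=> HP.
have Hl : forall a u v, (fun y => - pairing (P al y) x) (a *: u + v)
   = a * (fun y => - pairing (P al y) x) u + (fun y => - pairing (P al y) x) v.
  by move=> a u v /=; rewrite HP pairingDl; ring.
have := lin_expand Hl be => /= ->.
rewrite pairing_def; apply: eq_bigr => j _; by rewrite mxE mulrC.
Qed.

Lemma prod_addl {F : fieldType} {n : nat} (c : sconst F n) (x y z : vec F n) :
  prod c (x + y) z = prod c x z + prod c y z.
Proof. by have := prodDl c 1 x y z; rewrite !scale1r. Qed.
Lemma prod_addr {F : fieldType} {n : nat} (c : sconst F n) (x y z : vec F n) :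
  prod c z (x + y) = prod c z x + prod c z y.
Proof. by have := prodDr c 1 x y z; rewrite !scale1r. Qed.
Lemma prod_scalel {F : fieldType} {n : nat} (c : sconst F n) a (x z : vec F n) :
  prod c (a *: x) z = a *: prod c x z.
Proof. exact: (@linZ _ _ (fun x => prod c x z) (fun a u v => prodDl c a u v z)). Qed.
Lemma prod_scaler {F : fieldType} {n : nat} (c : sconst F n) a (x z : vec F n) :
  prod c z (a *: x) = a *: prod c z x.
Proof. exact: (@linZ _ _ (fun x => prod c z x) (fun a u v => prodDr c a u v z)). Qed.

Lemma dot_r_pair {F : fieldType} {n : nat} (c : sconst F n) r (al be y : vec F n) :
  pairing (dot_r c r al be) y =
  - pairing be (prod c (sharp r al) y) + pairing be (prod c y (sharp r al))
  + pairing al (prod c y (sharp r be)).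
Proof.
rewrite /dot_r /adstar !pairing_subl Lstar_pair !Rstar_pair; ring.
Qed.

Lemma brD_pair {F : fieldType} {n : nat} (c : sconst F n) r (al be y : vec F n) :
  pairing (brD (dot_r c r) al be) y =
  - pairing be (prod c (sharp r al) y) + pairing al (prod c (sharp r be) y).
Proof. rewrite /brD pairing_subl !dot_r_pair; ring. Qed.

Lemma dot_r_pair2 {F : fieldType} {n : nat} (c : sconst F n) r (al be y : vec F n) :
  pairing (dot_r c r al be) y =
  - pairing be (brg c (sharp r al) y) + pairing al (prod c y (sharp r be)).
Proof. rewrite dot_r_pair /brg pairing_subr; ring. Qed.

Lemma sharpD {F : fieldType} {n : nat} (r : 'M[F]_n) a (u v : vec F n) :
  sharp r (a *: u + v) = a *: sharp r u + sharp r v.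
Proof. by rewrite /sharp mulmxDl scalemxAl. Qed.

Lemma sharp_lin {F : fieldType} {n : nat} (r k : 'M[F]_n) t (u : vec F n) :
  sharp (r + t *: k) u = sharp r u + t *: sharp k u.
Proof. by rewrite /sharp mulmxDr scalemxAr. Qed.

Lemma dot_r_lin {F : fieldType} {n : nat} (c : sconst F n) r k t (a b : vec F n) :
  dot_r c r a b + t *: dot_r c k a b = dot_r c (r + t *: k) a b.
Proof.
apply: vec_ext => y; rewrite (pairing_addl (dot_r c r a b)) (pairing_scalel t (dot_r c k a b)) !dot_r_pair !sharp_lin.
rewrite !prod_addl !prod_addr !prod_scalel !prod_scaler !pairing_addr !pairing_scaler; ring.
Qed.

Lemma dot_r_linr {F : fieldType} {n : nat} (c : sconst F n) r (al : vec F n) a b1 b2 :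
  dot_r c r al (a *: b1 + b2) = a *: dot_r c r al b1 + dot_r c r al b2.
Proof.
apply: vec_ext => y; rewrite [RHS]pairingDl !dot_r_pair sharpD.
rewrite !prod_addr !prod_scaler !pairingDl !pairing_addr !pairing_scaler; ring.
Qed.

Lemma key {F : fieldType} {n : nat} (c : sconst F n) (r1 r2 : 'M[F]_n)
  (ph vph : vec F n -> vec F n) (P1 P2 : dprod F n) :
  sym_tensor r1 -> sym_tensor r2 -> weak_hom_s c r2 r1 ph vph ->
  (forall a b, P1 a b = dot_r c r1 a b) -> (forall a b, P2 a b = dot_r c r2 a b) ->
  weak_hom_p c P2 P1 ph vph.
Proof.
move=> Hr1 Hr2 [[Hph Hphb] Hvph HT H4] HP1 HP2.
have sym1 : forall i j, r1 i j = r1 j i.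
  by move=> i j; rewrite -{1}Hr1 mxE.
have sym2 : forall i j, r2 i j = r2 j i.
  by move=> i j; rewrite -{1}Hr2 mxE.
have M : forall p q, \sum_k r1 k q * vph (evec F k) 0 p
                   = \sum_l r2 p l * ph (evec F l) 0 q.
  move=> p q.
  have E := congr1 (fun A : 'M[F]_n => A p q) HT; rewrite /= !summxE in E.
  transitivity (\sum_k (\sum_l r1 k l *: tensor2 (vph (evec F k)) (evec F l)) p q).
    apply: eq_bigr => k _; symmetry; rewrite summxE.
    rewrite (eq_bigr (fun l => (r1 k l * vph (evec F k) 0 p) * evec F l 0 q)) ?sum_ev //.
    by move=> l _; rewrite mxE tensor2E; ring.
  rewrite E; under eq_bigr => k _ do rewrite summxE.
  rewrite exchange_big /=; apply: eq_bigr => l _.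
  rewrite (eq_bigr (fun k => (r2 k l * ph (evec F l) 0 q) * evec F k 0 p)) ?sum_ev //.
  by move=> k _; rewrite mxE tensor2E; ring.
have S1 : forall al, sharp r1 (dualmap vph al) = ph (sharp r2 al).
  move=> al; apply/rowP => q; rewrite (linv_expand Hph (sharp r2 al)) summxE /sharp !mxE.
  transitivity (\sum_p al 0 p * \sum_l r2 p l * ph (evec F l) 0 q).
    under eq_bigr => k _ do rewrite mxE pairing_def mulr_suml.
    rewrite exchange_big /=; apply: eq_bigr => p _; rewrite -M mulr_sumr.
    by apply: eq_bigr => k _; ring.
  symmetry; under eq_bigr => l _ do rewrite !mxE mulr_suml.
  rewrite exchange_big /=; apply: eq_bigr => p _; rewrite mulr_sumr.
  by apply: eq_bigr => l _; ring.
have S2 : forall be, vph (sharp r1 be) = sharp r2 (dualmap ph be).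
  move=> be; apply/rowP => p; rewrite (linv_expand Hvph (sharp r1 be)) summxE /sharp !mxE.
  transitivity (\sum_q be 0 q * \sum_l r2 p l * ph (evec F l) 0 q).
    under eq_bigr => k _ do rewrite !mxE mulr_suml.
    rewrite exchange_big /=; apply: eq_bigr => q _; rewrite -M mulr_sumr.
    by apply: eq_bigr => k _; rewrite sym1; ring.
  symmetry; under eq_bigr => l _ do rewrite mxE pairing_def mulr_suml.
  rewrite exchange_big /=; apply: eq_bigr => q _; rewrite mulr_sumr.
  by apply: eq_bigr => l _; rewrite sym2; ring.
have Hdl : Defs.linearP (dualmap vph).
  by move=> a u v; apply/rowP => j; rewrite !mxE pairingDl.
have P1lin : forall al a b1 b2, P1 al (a *: b1 + b2) = a *: P1 al b1 + P1 al b2.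
  by move=> al a b1 b2; rewrite !HP1 dot_r_linr.
have P2lin : forall al a b1 b2, P2 al (a *: b1 + b2) = a *: P2 al b1 + P2 al b2.
  by move=> al a b1 b2; rewrite !HP2 dot_r_linr.
have H4dual : forall x be, dualmap vph (Lstar c x be) = Lstar c (ph x) (dualmap vph be).
  move=> x be; apply: vec_ext => y.
  by rewrite !(dualmap_pair (f:=vph)) // !Lstar_pair (dualmap_pair (f:=vph)) // H4.
have eb : forall P r, (forall a b, P a b = dot_r c r a b) ->
    forall a b, brD P a b = brD (dot_r c r) a b.
  by move=> P r HP a b; rewrite /brD !HP.
have HD : forall al be, dualmap vph (brD P2 al be) = brD P1 (dualmap vph al) (dualmap vph be).
  move=> al be; rewrite (eb _ _ HP1) (eb _ _ HP2); apply: vec_ext => y.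
  rewrite (dualmap_pair (f:=vph)) // !brD_pair !S1 !(dualmap_pair (f:=vph)) // !H4 //.
have HL : forall al y, ph (LstarD P2 al y) = LstarD P1 (dualmap vph al) (ph y).
  move=> al y; apply: vec_ext => be.
  rewrite pairingC -(dualmap_pair be (LstarD P2 al y) Hph) pairingC.
  rewrite (LstarD_pair _ _ (P2lin al)) (LstarD_pair _ _ (P1lin (dualmap vph al))).
  rewrite HP1 HP2 !dot_r_pair2 S1 (dualmap_pair (f:=ph)) // Hphb (dualmap_pair (f:=vph)) // H4 S2 //.
split => //.
split.
- by move=> a [x al] [y be]; rewrite /addp /scalep /= Hph Hdl.
move=> [x al] [y be] /=; congr pair.
- by rewrite (@linD _ _ ph Hph) (@linB _ _ ph Hph) !HL Hphb.
- by rewrite (@linB _ _ _ Hdl) (@linD _ _ _ Hdl) HD !H4dual.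
Qed.

Unset Implicit Arguments.
Set Strict Implicit.

Theorem proposition5p10 (F : fieldType) (n : nat) (c : sconst F n)
    (r kappa1 kappa2 : 'M[F]_n) :
  [pchar F] =i pred0 ->
  preLie c ->
  sym_tensor r -> smatrix c r ->
  inf_deformation c r kappa1 -> inf_deformation c r kappa2 ->
  deform_equiv c r kappa1 kappa2 ->
  phase_equiv c r (pi_kappa c kappa1) (pi_kappa c kappa2).
Proof.
move=> _ _ Hr _ [Hk1 _] [Hk2 _] [x [_ Hx]]; exists x => t.
have sym : forall k, sym_tensor k -> sym_tensor (r + t *: k).
  by move=> k Hk; rewrite /sym_tensor linearD linearZ /= Hr Hk.
apply: key (Hx t) _ _ => //; try exact: sym.
- by move=> a b; rewrite /pi_kappa dot_r_lin.
- by move=> a b; rewrite /pi_kappa dot_r_lin.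
Qed.
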